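(* Let $\gamma\in\mathcal{M}_k\otimes\mathcal{M}_m$ be a pure state, i.e., a state of rank $1$. Then $\gamma\in CR_{k,m}$ if and only if $\gamma$ is separable, i.e., $\gamma=vv^*$ with $v=a\otimes b$ for some $a\in\mathbb{C}^k$, $b\in\mathbb{C}^m$.
   Context: $\mathcal{M}_k$ denotes the complex $k\times k$ matrices, and $\mathcal{M}_k\otimes\mathcal{M}_m$ is identified with $\mathcal{M}_{km}$ via the Kronecker product. A state is a positive semidefinite Hermitian matrix (not necessarily of trace one). For $\gamma=\sum_{i=1}^nA_i\otimes B_i\in\mathcal{M}_k\otimes\mathcal{M}_m$ define $G_\gamma:\mathcal{M}_k\to\mathcal{M}_m$, $G_\gamma(X)=\sum_i\mathrm{tr}(A_iX)B_i$, and $F_\gamma:\mathcal{M}_m\to\mathcal{M}_k$, $F_\gamma(Y)=\sum_i\mathrm{tr}(B_iY)A_i$. A linear map is positive if it maps positive semidefinite matrices to positive semidefinite matrices, and self-adjoint if self-adjoint with respect to $\langle X,Y\rangle=\mathrm{tr}(XY^* )$. For orthogonal projections $V,W$, $V\mathcal{M}_kW=\{VXW:X\in\mathcal{M}_k\}$. Given an orthogonal projection $V\in\mathcal{M}_k$ and a positive map $T:V\mathcal{M}_kV\to V\mathcal{M}_kV$, $T$ is irreducible if the only orthogonal projections $W$ with $W\mathcal{M}_kW\subseteq V\mathcal{M}_kV$ and $T(W\mathcal{M}_kW)\subseteq W\mathcal{M}_kW$ are $W=0$ and $W=V$. A self-adjoint positive map $T:\mathcal{M}_k\to\mathcal{M}_k$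 is completely reducible if there are orthogonal projections $W_1,\dots,W_l$ with $W_iW_j=0$ for $i\ne j$, $T(W_i\mathcal{M}_kW_i)\subseteq W_i\mathcal{M}_kW_i$ and $T|_{W_i\mathcal{M}_kW_i}$ irreducible for every $i$, and $T|_R\equiv0$, where $R$ is the orthogonal complement (trace inner product) of $\bigoplus_iW_i\mathcal{M}_kW_i$ in $\mathcal{M}_k$. $CR_{k,m}$ is the set of states $\gamma\in\mathcal{M}_k\otimes\mathcal{M}_m$ such that $F_\gamma\circ G_\gamma:\mathcal{M}_k\to\mathcal{M}_k$ is completely reducible. *)

(* Defs.v *)
(* Complex numbers are modelled as R[i] (= complex R,
   from mathcomp-real-closed) over an arbitrary R : realType. *)
From HB Require Import structures.
From mathcomp Require Import all_boot all_order all_algebra.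
From mathcomp Require Import complex mxtens.
From mathcomp Require Import reals.
Set Implicit Arguments. Unset Strict Implicit. Unset Printing Implicit Defensive.
Import Order.TTheory GRing.Theory Num.Theory.
Local Open Scope ring_scope.

Section Defs.
Variable C : numClosedFieldType.

Definition adjmx (p q : nat) (A : 'M[C]_(p, q)) : 'M[C]_(q, p) :=
  (map_mx Num.conj A)^T.

(* a "state": positive semidefinite Hermitian matrix (trace not normalized) *)
Definition is_state (n : nat) (A : 'M[C]_n) : Prop :=
  adjmx A = A /\ forall v : 'cV[C]_n, 0 <= (adjmx v *m A *m v) 0 0.

Definition tr_inner (n : nat) (X Y : 'M[C]_n) : C := \tr (X *m adjmx Y).

(* M_k (x) M_m is identified with M_{km} via the Kronecker product
   (mxtens: (A *t B) (i*m+p, j*q'+q) = A i j * B p q).  Every gamma in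
   M_{km} decomposes canonically as
     gamma = \sum_{i,j,p,q} gamma_{(i,p),(j,q)} E_ij (x) E_pq,
   and G_gamma, F_gamma are given by the defining formulas on this
   decomposition (they do not depend on the chosen decomposition). *)
Definition G_map (k m : nat) (gamma : 'M[C]_(k * m)) (X : 'M[C]_k) : 'M[C]_m :=
  \sum_(i < k) \sum_(j < k) \sum_(p < m) \sum_(q < m)
    (gamma (mxtens_index (i, p)) (mxtens_index (j, q))
      * \tr (delta_mx i j *m X)) *: delta_mx p q.

Definition F_map (k m : nat) (gamma : 'M[C]_(k * m)) (Y : 'M[C]_m) : 'M[C]_k :=
  \sum_(i < k) \sum_(j < k) \sum_(p < m) \sum_(q < m)
    (gamma (mxtens_index (i, p)) (mxtens_index (j, q))
      * \tr (delta_mx p q *m Y)) *: delta_mx i j.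

Definition orth_proj (k : nat) (W : 'M[C]_k) : Prop :=
  adjmx W = W /\ W *m W = W.

Definition corner_sub (k : nat) (W V : 'M[C]_k) : Prop :=
  forall X : 'M[C]_k, exists Y : 'M[C]_k, W *m X *m W = V *m Y *m V.

Definition corner_inv (k : nat) (T : 'M[C]_k -> 'M[C]_k) (W : 'M[C]_k) : Prop :=
  forall X : 'M[C]_k, exists Y : 'M[C]_k, T (W *m X *m W) = W *m Y *m W.

Definition positive_map (k : nat) (T : 'M[C]_k -> 'M[C]_k) : Prop :=
  forall X : 'M[C]_k, is_state X -> is_state (T X).

Definition selfadjoint_map (k : nat) (T : 'M[C]_k -> 'M[C]_k) : Prop :=
  forall X Y : 'M[C]_k, tr_inner (T X) Y = tr_inner X (T Y).

Definition irreducible_on (k : nat) (T : 'M[C]_k -> 'M[C]_k) (V : 'M[C]_k) : Prop :=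
  forall W : 'M[C]_k, orth_proj W -> corner_sub W V -> corner_inv T W ->
    W = 0 \/ W = V.

Definition completely_reducible (k : nat) (T : 'M[C]_k -> 'M[C]_k) : Prop :=
  selfadjoint_map T /\ positive_map T /\
  exists (l : nat) (W : 'I_l -> 'M[C]_k),
    [/\ forall i, orth_proj (W i),
        forall i j, i != j -> W i *m W j = 0,
        forall i, corner_inv T (W i),
        forall i, irreducible_on T (W i)
      & forall X : 'M[C]_k,
          (forall i (Y : 'M[C]_k), tr_inner X (W i *m Y *m W i) = 0) ->
          T X = 0].

Definition CR (k m : nat) (gamma : 'M[C]_(k * m)) : Prop :=
  is_state gamma /\ completely_reducible (fun X => F_map gamma (G_map gamma X)).

End Defs.

(* Main.v *)
Require Import Defs.
From HB Require Import structures.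
From mathcomp Require Import all_boot all_order all_algebra.
From mathcomp Require Import complex mxtens.
From mathcomp Require Import reals.
From mathcomp Require Import spectral sesquilinear.
From Stdlib Require Import FunctionalExtensionality.
Set Implicit Arguments. Unset Strict Implicit. Unset Printing Implicit Defensive.
Import Order.TTheory GRing.Theory Num.Theory.
Local Open Scope ring_scope.


Section Basic.
Variable C : numClosedFieldType.
Local Notation adj := (@adjmx C _ _).

Lemma hadjE p q (A : 'M[C]_(p, q)) i j : adj A i j = (A j i)^*.
Proof. by rewrite !mxE. Qed.

Lemma hadjK p q (A : 'M[C]_(p, q)) : adj (adj A) = A.
Proof. by apply/matrixP => i j; rewrite !hadjE conjCK. Qed.

Lemma hadjM p q r (A : 'M[C]_(p, q)) (B : 'M[C]_(q, r)) :
  adj (A *m B) = adj B *m adj A.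
Proof.
apply/matrixP => i j; rewrite hadjE !mxE rmorph_sum; apply: eq_bigr => l _.
by rewrite rmorphM !hadjE mulrC.
Qed.

Lemma hadjD p q (A B : 'M[C]_(p, q)) : adj (A + B) = adj A + adj B.
Proof. by apply/matrixP => i j; rewrite !mxE rmorphD. Qed.

Lemma hadjN p q (A : 'M[C]_(p, q)) : adj (- A) = - adj A.
Proof. by apply/matrixP => i j; rewrite !mxE rmorphN. Qed.

Lemma hadjB p q (A B : 'M[C]_(p, q)) : adj (A - B) = adj A - adj B.
Proof. by rewrite hadjD hadjN. Qed.

Lemma hadjZ p q c (A : 'M[C]_(p, q)) : adj (c *: A) = c^* *: adj A.
Proof. by apply/matrixP => i j; rewrite !mxE rmorphM. Qed.

Lemma hadj0 p q : adj (0 : 'M[C]_(p, q)) = 0.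
Proof. by apply/matrixP => i j; rewrite !mxE conjC0. Qed.

Lemma hadj1 p : adj (1%:M : 'M[C]_p) = 1%:M.
Proof.
apply/matrixP => i j; rewrite !mxE.
by case: (j =P i) => [->|/eqP ne]; rewrite ?eqxx ?conjC1 // eq_sym (negbTE ne) conjC0.
Qed.

Lemma hadj_eq0 p q (A : 'M[C]_(p, q)) : A *m adj A = 0 -> A = 0.
Proof.
move=> H; apply/matrixP => i j; rewrite mxE.
have /matrixP /(_ i i) := H; rewrite !mxE => /eqP.
rewrite psumr_eq0; last by move=> l _; rewrite hadjE mul_conjC_ge0.
move=> /allP /(_ j (mem_index_enum _)) /implyP /(_ isT).
by rewrite hadjE mul_conjC_eq0 => /eqP.
Qed.

Lemma hadj_eq0' p q (A : 'M[C]_(p, q)) : adj A *m A = 0 -> A = 0.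
Proof. by move=> H; rewrite -[A]hadjK (hadj_eq0 (A := adj A)) ?hadj0 // hadjK. Qed.

End Basic.


Section Bridge.
Variable C : numClosedFieldType.
Local Notation adj := (@adjmx C _ _).

Lemma trace_delta n (i j : 'I_n) (X : 'M[C]_n) : \tr (delta_mx i j *m X) = X j i.
Proof.
rewrite /mxtrace (bigD1 i) //= big1 => [|r nr]; last first.
  by rewrite !mxE big1 // => s _; rewrite mxE (negbTE nr) mul0r.
rewrite addr0 !mxE (bigD1 j) //= big1 => [|s ns]; last first.
  by rewrite mxE (negbTE ns) andbF mul0r.
by rewrite mxE !eqxx mul1r addr0.
Qed.

Lemma sum_delta m n (f : 'I_m -> 'I_n -> C) :
  \sum_p \sum_q f p q *: delta_mx p q = \matrix_(p, q) f p q.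
Proof.
rewrite [RHS]matrix_sum_delta; apply: eq_bigr => p _; apply: eq_bigr => q _.
by rewrite mxE.
Qed.

Lemma Gform k m (g : 'M[C]_(k * m)) X :
  G_map g X = \matrix_(p, q) \sum_i \sum_j
     g (mxtens_index (i, p)) (mxtens_index (j, q)) * X j i.
Proof.
rewrite /G_map; apply/matrixP => p q; rewrite !mxE summxE.
apply: eq_bigr => i _; rewrite summxE; apply: eq_bigr => j _.
by rewrite sum_delta mxE trace_delta.
Qed.

Lemma Fform k m (g : 'M[C]_(k * m)) Y :
  F_map g Y = \matrix_(i, j) \sum_p \sum_q
     g (mxtens_index (i, p)) (mxtens_index (j, q)) * Y q p.
Proof.
rewrite /F_map.
rewrite (eq_bigr (fun i => \sum_j (\sum_p \sum_q
     g (mxtens_index (i, p)) (mxtens_index (j, q)) * \tr (delta_mx p q *m Y)) *: delta_mx i j)); last first.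
  move=> i _; apply: eq_bigr => j _; rewrite scaler_suml; apply: eq_bigr => p _.
  by rewrite scaler_suml.
rewrite sum_delta; apply/matrixP => i j; rewrite !mxE.
apply: eq_bigr => p _; apply: eq_bigr => q _.
by rewrite trace_delta.
Qed.

Lemma TE k m (V : 'M[C]_(k, m)) (g : 'M[C]_(k * m)) :
  (forall i p j q, g (mxtens_index (i, p)) (mxtens_index (j, q)) = V i p * (V j q)^*) ->
  forall X, F_map g (G_map g X) = (V *m adj V) *m X *m (V *m adj V).
Proof.
move=> gE X.
have -> : G_map g X = (adj V *m X *m V)^T.
  rewrite Gform; apply/matrixP => p q; rewrite !mxE.
  apply: eq_bigr => i _; rewrite mxE mulr_suml; apply: eq_bigr => j _.
  by rewrite gE hadjE [RHS]mulrC mulrA.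
have FE : forall Y, F_map g Y = V *m Y^T *m adj V.
  move=> Y; rewrite Fform; apply/matrixP => i j; rewrite !mxE exchange_big /=.
  apply: eq_bigr => q _; rewrite mxE mulr_suml; apply: eq_bigr => p _.
  by rewrite gE !mxE mulrAC.
by rewrite FE trmxK !mulmxA.
Qed.
End Bridge.


Section Core.
Variable C : numClosedFieldType.
Local Notation adj := (@adjmx C _ _).
Variable k : nat.
Implicit Types A W X Y : 'M[C]_k.

Lemma sa_map A : adj A = A -> selfadjoint_map (fun X => A *m X *m A).
Proof.
move=> hA X Y; rewrite /tr_inner !hadjM hA -!mulmxA mxtrace_mulC !mulmxA.
by rewrite -!mulmxA.
Qed.

Lemma pos_map A : adj A = A -> positive_map (fun X => A *m X *m A).
Proof.
move=> hA X [hX pX]; split; first by rewrite !hadjM hA hX mulmxA.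
move=> v; have := pX (A *m v); rewrite hadjM hA.
by rewrite !mulmxA.
Qed.

Lemma commute_of_inv A W : adj A = A -> orth_proj W ->
  corner_inv (fun X => A *m X *m A) W -> A *m W = W *m A.
Proof.
move=> hA [hW WW] inv; have [Y HY] := inv 1%:M.
rewrite mulmx1 in HY.
have h1 : (1%:M - W) *m W = 0 by rewrite mulmxBl mul1mx WW subrr.
set M := (1%:M - W) *m A *m W.
have M0 : M = 0.
  apply: hadj_eq0.
  have -> : M *m adj M = (1%:M - W) *m (A *m (W *m W) *m A) *m (1%:M - W).
    by rewrite /M !hadjM hadjB hadj1 hA hW !mulmxA.
  by rewrite HY !mulmxA h1 !mul0mx.
have e1 : A *m W = W *m A *m W.
  apply/eqP; rewrite -subr_eq0; apply/eqP; rewrite -M0 /M.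
  by rewrite !mulmxBl !mul1mx.
have := congr1 adj e1; rewrite !hadjM hA hW => e2.
by rewrite e1 {2}e2 mulmxA.
Qed.

End Core.

Section Eig.
Variable C : numClosedFieldType.
Local Notation adj := (@adjmx C _ _).

Lemma adj_tstar p q (M : 'M[C]_(p, q)) : adj M = (M ^t*)%sesqui.
Proof. by rewrite /adjmx -map_trmx. Qed.

Lemma norm_gt0 k (x : 'cV[C]_k) : x != 0 -> 0 < (adj x *m x) 0 0.
Proof.
move=> nx; rewrite lt_def; apply/andP; split.
  apply/negP => /eqP h; move/negP: nx; apply; apply/eqP; apply: hadj_eq0'.
  by rewrite [adj x *m x]mx11_scalar h raddf0.
rewrite mxE sumr_ge0 // => i _; rewrite hadjE mulrC mul_conjC_ge0 //.
Qed.

Lemma normalize k (x : 'cV[C]_k) : x != 0 ->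
  exists (w : 'cV[C]_k) (s : C), [/\ adj w *m w = 1%:M, x = s *: w, s != 0 & s^* = s].
Proof.
move=> nx; have n0 := norm_gt0 nx; set n := (adj x *m x) 0 0 in n0.
have s0 : 0 < sqrtC n by rewrite sqrtC_gt0.
have sr : (sqrtC n)^* = sqrtC n by rewrite geC0_conj // ltW.
have sn0 : sqrtC n != 0 by rewrite gt_eqF.
have sr' : ((sqrtC n)^-1)^* = (sqrtC n)^-1 by rewrite geC0_conj // invr_ge0 ltW.
exists ((sqrtC n)^-1 *: x), (sqrtC n); split => //.
  rewrite hadjZ -scalemxAl -scalemxAr scalerA sr' [adj x *m x]mx11_scalar -/n.
  rewrite scale_scalar_mx; congr (_%:M).
  by rewrite -invfM -expr2 sqrtCK mulVf // gt_eqF.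
by rewrite scalerA mulfV // scale1r.
Qed.


Lemma mul_delta_col p q (M : 'M[C]_(p, q)) r i :
  (M *m delta_mx r (0 : 'I_1)) i 0 = M i r.
Proof.
rewrite mxE (bigD1 r) //= big1 => [|s ns]; last by rewrite mxE (negbTE ns) mulr0.
by rewrite mxE !eqxx mulr1 addr0.
Qed.

Lemma diag_delta q (d : 'rV[C]_q) r :
  diag_mx d *m delta_mx r (0 : 'I_1) = d 0 r *: delta_mx r 0.
Proof.
rewrite mul_diag_mx; apply/matrixP => i j; rewrite !mxE.
by case: (i =P r) => [->|_]; rewrite ?mulr0 ?andFb.
Qed.

Lemma eig_in k (A W : 'M[C]_k) : adj A = A -> orth_proj W -> A *m W = W *m A ->
  W != 0 ->
  exists (w : 'cV[C]_k) (mu : C), [/\ adj w *m w = 1%:M, W *m w = w & A *m w = mu *: w].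
Proof.
move=> hA [hW WW] cAW nW.
have nA : A \is normalmx by apply/normalmxP; rewrite -!adj_tstar hA.
have := orthomx_spectralP nA.
set P := spectralmx A; set d := spectral_diag A => Ae.
have Pu : P \is unitarymx := spectral_unitarymx A.
rewrite invmx_unitary // -adj_tstar in Ae.
set U := adj P in Ae.
have PU : P *m U = 1%:M by rewrite /U adj_tstar; apply/unitarymxP.
have UP : U *m P = 1%:M by apply: mulmx1C.
have AU : A *m U = U *m diag_mx d by rewrite Ae -!mulmxA PU mulmx1.
have [r hr] : exists r, W *m U *m delta_mx r (0 : 'I_1) != 0.
  case: (pickP (fun r => W *m U *m delta_mx r (0 : 'I_1) != 0)) => [r hr|h].
    by exists r.
  exfalso; move/negP: nW; apply; apply/eqP.
  have WU0 : W *m U = 0.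
    apply/matrixP => i r; have := h r; move/negbFE/eqP/matrixP/(_ i 0).
    by rewrite mul_delta_col !mxE.
  by rewrite -[W]mulmx1 -UP mulmxA WU0 mul0mx.
set x := W *m U *m delta_mx r 0 in hr.
have Wx : W *m x = x by rewrite /x !mulmxA WW.
have Ax : A *m x = d 0 r *: x.
  rewrite /x !mulmxA cAW -(mulmxA W A) AU !mulmxA -(mulmxA _ (diag_mx d)).
  by rewrite diag_delta scalemxAr.
have [w [s [ww xs s0 _]]] := normalize hr.
have hw : w = s^-1 *: x by rewrite xs scalerA mulVf // scale1r.
exists w, (d 0 r); split => //.
  by rewrite hw -scalemxAr Wx.
by rewrite hw -scalemxAr Ax !scalerA mulrC.
Qed.

End Eig.

Section Rank1.
Variable C : numClosedFieldType.
Local Notation adj := (@adjmx C _ _).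
Variable k : nat.

Lemma orth_rank1 (w : 'cV[C]_k) : adj w *m w = 1%:M -> orth_proj (w *m adj w).
Proof.
move=> ww; split; first by rewrite hadjM hadjK.
by rewrite mulmxA -(mulmxA w) ww mulmx1.
Qed.

Lemma one11_neq0 : (1%:M : 'M[C]_1) != 0.
Proof. by apply/negP => /eqP/matrixP/(_ 0 0); rewrite !mxE eqxx /= => /eqP; rewrite oner_eq0. Qed.

Lemma rank1_of_irr (A W : 'M[C]_k) : adj A = A -> orth_proj W -> W != 0 ->
  corner_inv (fun X => A *m X *m A) W -> irreducible_on (fun X => A *m X *m A) W ->
  exists (w : 'cV[C]_k) (mu : C),
    [/\ adj w *m w = 1%:M, W = w *m adj w & A *m w = mu *: w].
Proof.
move=> hA oW nW ci irr.
have cAW := commute_of_inv hA oW ci.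
have [w [mu [ww Ww Aw]]] := eig_in hA oW cAW nW.
case: oW => hW WW.
set P' := w *m adj w.
have oP := orth_rank1 ww.
have Wadj : adj w *m W = adj w by rewrite -{1}hW -hadjM Ww.
have wA : adj w *m A = mu^* *: adj w by rewrite -{1}hA -hadjM Aw hadjZ.
have cs : corner_sub P' W.
  move=> X; exists (P' *m X *m P').
  by rewrite /P' !mulmxA Ww -(mulmxA _ (adj w) W) Wadj.
have cinv : corner_inv (fun X => A *m X *m A) P'.
  move=> X; exists ((mu * mu^*) *: X) => /=.
  rewrite /P' !mulmxA Aw -(mulmxA _ (adj w) A) wA.
  by rewrite -!scalemxAl -!scalemxAr -!scalemxAl !scalerA.
have [hP|hP] := irr P' oP cs cinv.
  exfalso; move: hP; rewrite /P' => /(congr1 (fun M => adj w *m M *m w)).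
  rewrite mulmx0 mul0mx !mulmxA ww mul1mx ww => /eqP.
  by rewrite (negbTE one11_neq0).
by exists w, mu; split.
Qed.

End Rank1.

Section Forward.
Variable C : numClosedFieldType.
Local Notation adj := (@adjmx C _ _).

Lemma fin_lemma k m (V : 'M[C]_(k, m)) (Q : 'M[C]_k) : adj Q = Q -> Q *m Q = Q ->
  V *m adj V *m Q *m (V *m adj V) = 0 -> Q *m V = 0.
Proof.
move=> hQ QQ h.
have AQ : V *m adj V *m Q = 0.
  apply: hadj_eq0.
  have -> : V *m adj V *m Q *m adj (V *m adj V *m Q) =
     V *m adj V *m (Q *m Q) *m (V *m adj V) by rewrite !hadjM hadjK hQ !mulmxA.
  by rewrite QQ.
have QA : Q *m (V *m adj V) = 0.
  by have := congr1 adj AQ; rewrite !hadjM hadjK hQ hadj0 mulmxA.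
apply: hadj_eq0.
have -> : Q *m V *m adj (Q *m V) = Q *m (V *m adj V) *m Q by rewrite hadjM hQ !mulmxA.
by rewrite QA mul0mx.
Qed.



Lemma dec_lemma k (A : 'M[C]_k) l (W : 'I_l -> 'M[C]_k) :
  (forall i, orth_proj (W i)) -> (forall i j, i != j -> W i *m W j = 0) ->
  (forall X, (forall i Y, tr_inner X (W i *m Y *m W i) = 0) -> A *m X *m A = 0) ->
  forall X, A *m X *m A = \sum_i A *m (W i *m X *m W i) *m A.
Proof.
move=> oW orth last X.
set Y0 := X - \sum_i W i *m X *m W i.
have h0 : forall j, W j *m Y0 *m W j = 0.
  move=> j; case: (oW j) => _ WW.
  rewrite /Y0 mulmxBr mulmxBl mulmx_sumr mulmx_suml (bigD1 j) //= big1 => [|i ij].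
    by rewrite addr0 !mulmxA WW -(mulmxA _ (W j) (W j)) WW subrr.
  rewrite !mulmxA (orth j i); last by rewrite eq_sym.
  by rewrite !mul0mx.
have hY : A *m Y0 *m A = 0.
  apply: last => j Y; rewrite /tr_inner.
  case: (oW j) => hW _.
  have -> : Y0 *m adj (W j *m Y *m W j) = (Y0 *m W j *m adj Y) *m W j.
    by rewrite !hadjM hW !mulmxA.
  rewrite mxtrace_mulC !mulmxA.
  by rewrite -(mulmxA (W j) Y0 (W j)) mulmxA h0 mul0mx mxtrace0.
move: hY; rewrite /Y0 mulmxBr mulmxBl mulmx_sumr mulmx_suml => /eqP.
by rewrite subr_eq0 => /eqP.
Qed.



Lemma scal11_eq0 (c : C) : c *: (1%:M : 'M[C]_1) = 0 -> c = 0.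
Proof. by move/matrixP/(_ 0 0); rewrite !mxE eqxx mulr1. Qed.

Lemma forward_core k m (V : 'M[C]_(k, m)) :
  completely_reducible (fun X => (V *m adj V) *m X *m (V *m adj V)) ->
  exists w : 'cV[C]_k, V = w *m (adj w *m V).
Proof.
set A := V *m adj V.
have hA : adj A = A by rewrite /A hadjM hadjK.
case=> _ [_ [l [W [oW orth ci irr last]]]].
have dec := dec_lemma oW orth last.
have Qfin : forall w : 'cV[C]_k, (adj w *m w = 1%:M \/ w = 0) ->
    A *m (1%:M - w *m adj w) *m A = 0 -> V = w *m (adj w *m V).
  move=> w hw h.
  have PP : w *m adj w *m (w *m adj w) = w *m adj w.
    case: hw => [ww|->]; last by rewrite !mul0mx.
    by rewrite mulmxA -(mulmxA w) ww mulmx1.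
  have hQ : adj (1%:M - w *m adj w) = 1%:M - w *m adj w.
    by rewrite hadjB hadj1 hadjM hadjK.
  have QQ : (1%:M - w *m adj w) *m (1%:M - w *m adj w) = 1%:M - w *m adj w.
    by rewrite mulmxBl !mulmxBr ?mul1mx ?mulmx1 PP subrr subr0.
  have := fin_lemma hQ QQ h.
  by rewrite mulmxBl mul1mx => /eqP; rewrite subr_eq0 => /eqP {1}->; rewrite mulmxA.
case: (pickP (fun i => A *m W i != 0)) => [i0 hi0 | hnone]; last first.
  exists 0; apply: (Qfin 0 (or_intror erefl)).
  rewrite dec big1 // => j _; rewrite !mulmxA.
  by have := hnone j; move/negbFE/eqP => ->; rewrite !mul0mx.
have nWof : forall j, A *m W j != 0 -> W j != 0.
  by move=> j; apply: contraNneq => ->; rewrite mulmx0.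
have [w [mu [ww Wi0 Aw]]] := rank1_of_irr hA (oW i0) (nWof _ hi0) (ci i0) (irr i0).
have muof : forall (u : 'cV[C]_k) (nu : C) j, W j = u *m adj u -> A *m u = nu *: u ->
    A *m W j != 0 -> nu != 0.
  move=> u nu j -> Au; apply: contraNneq => nu0.
  by rewrite mulmxA Au nu0 scale0r mul0mx.
have mu0 := muof _ _ _ Wi0 Aw hi0.
have Wiw : W i0 *m w = w by rewrite Wi0 -mulmxA ww mulmx1.
have others : forall j, j != i0 -> A *m W j = 0.
  move=> j ji; case: (eqVneq (A *m W j) 0) => // hj; exfalso.
  have [wj [muj [wwj Wj Awj]]] := rank1_of_irr hA (oW j) (nWof _ hj) (ci j) (irr j).
  have muj0 := muof _ _ _ Wj Awj hj.
  have Wjw : W j *m wj = wj by rewrite Wj -mulmxA wwj mulmx1.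
  have wjA : adj wj *m A = muj^* *: adj wj by rewrite -{1}hA -hadjM Awj hadjZ.
  set X := w *m adj wj.
  have e1 : A *m X *m A = (mu * muj^*) *: X.
    rewrite /X mulmxA Aw -mulmxA wjA.
    by rewrite -scalemxAl -scalemxAr scalerA.
  have e2 : \sum_l0 A *m (W l0 *m X *m W l0) *m A = 0.
    rewrite big1 // => l0 _; case: (eqVneq l0 i0) => [->|li0].
      have h0 : adj wj *m W i0 = 0.
        case: (oW i0) => hW _.
        rewrite -hW -hadjM -Wjw mulmxA (orth i0 j) ?mul0mx ?hadj0 //.
        by rewrite eq_sym.
      by rewrite /X -(mulmxA _ _ (W i0)) -(mulmxA w) h0 !mulmx0 mul0mx.
    have hl : W l0 *m w = 0 by rewrite -Wiw mulmxA (orth l0 i0) // mul0mx.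
    by rewrite /X (mulmxA (W l0) w) hl !mul0mx mulmx0 mul0mx.
  have := dec X; rewrite e1 e2 => /(congr1 (fun M => adj w *m M *m wj)).
  rewrite mulmx0 mul0mx -scalemxAr -scalemxAl /X !mulmxA ww mul1mx wwj.
  move/scal11_eq0/eqP; rewrite mulf_eq0 conjC_eq0.
  by rewrite (negbTE mu0) (negbTE muj0).
exists w; apply: (Qfin w (or_introl ww)).
rewrite dec big1 // => j _; case: (eqVneq j i0) => [->|ji]; last first.
  by rewrite !mulmxA (others j ji) !mul0mx.
have -> : W i0 *m (1%:M - w *m adj w) = 0.
  by rewrite Wi0 mulmxBr mulmx1 mulmxA -(mulmxA w) ww mulmx1 subrr.
by rewrite !mul0mx mulmx0 mul0mx.
Qed.

End Forward.

Section Backward.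
Variable C : numClosedFieldType.
Local Notation adj := (@adjmx C _ _).
Variable k : nat.

Lemma PXP (w : 'cV[C]_k) X :
  w *m adj w *m X *m (w *m adj w) = ((adj w *m X *m w) 0 0) *: (w *m adj w).
Proof.
have -> : w *m adj w *m X *m (w *m adj w) = w *m (adj w *m X *m w) *m adj w.
  by rewrite !mulmxA.
by rewrite {1}[adj w *m X *m w]mx11_scalar mul_mx_scalar -scalemxAl.
Qed.

Lemma backward_zero : completely_reducible (fun X : 'M[C]_k => 0 *m X *m 0).
Proof.
split; first exact: sa_map (hadj0 _ _ _).
split; first exact: pos_map (hadj0 _ _ _).
exists 0%N, (fun _ => 0); split; try by case.
by move=> X _; rewrite mul0mx mulmx0.
Qed.

Lemma backward_rank1 (w : 'cV[C]_k) (kap : C) (A : 'M[C]_k) :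
  adj w *m w = 1%:M -> adj A = A -> A = kap *: (w *m adj w) ->
  completely_reducible (fun X => A *m X *m A).
Proof.
move=> ww hA Ae.
have oP := orth_rank1 ww; case: (oP) => hP PP.
set P := w *m adj w in oP hP PP Ae *.
have Pdef : P = w *m adj w by [].
clearbody P.
split; first exact: sa_map.
split; first exact: pos_map.
exists 1%N, (fun _ => P); split => //.
- by move=> i j; rewrite (ord1 i) (ord1 j) eqxx.
- move=> _ X; exists ((kap * kap) *: X) => /=.
  rewrite Ae -?scalemxAl -?scalemxAr -?scalemxAl -?scalemxAr scalerA.
  by rewrite !mulmxA PP -(mulmxA _ P P) PP.
- move=> _ W' [hW' WW'] cs _.
  have [Y HY] := cs 1%:M; rewrite mulmx1 WW' Pdef PXP -Pdef in HY.
  set t := (adj w *m Y *m w) 0 0 in HY.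
  have tt : t * t = t.
    move: WW'; rewrite HY -scalemxAl -scalemxAr PP scalerA.
    move/(congr1 (fun M => adj w *m M *m w)).
    rewrite -!scalemxAr -!scalemxAl Pdef !mulmxA ww mul1mx ww => /matrixP/(_ 0 0).
    by rewrite !mxE eqxx !mulr1.
  have : t * (t - 1) = 0 by rewrite mulrBr mulr1 tt subrr.
  move/eqP; rewrite mulf_eq0 subr_eq0 => /orP[] /eqP ht.
    by left; rewrite HY ht scale0r.
  by right; rewrite HY ht scale1r.
- move=> X hX; have h0 := hX ord0 1%:M.
  rewrite /tr_inner mulmx1 PP hP Pdef mxtrace_mulC in h0.
  rewrite -mulmxA mxtrace_mulC trace_mx11 in h0.
  rewrite Ae -?scalemxAl -?scalemxAr -?scalemxAl Pdef PXP h0 scale0r.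
  by rewrite !scaler0.
Qed.

End Backward.


Section Top.
Variable C : numClosedFieldType.
Local Notation adj := (@adjmx C _ _).

Lemma mul_delta_row p q (M : 'M[C]_(p, q)) r j :
  (delta_mx (0 : 'I_1) r *m M) 0 j = M r j.
Proof.
rewrite mxE (bigD1 r) //= big1 => [|s ns]; last by rewrite mxE (negbTE ns) andbF mul0r.
by rewrite mxE !eqxx mul1r addr0.
Qed.

Lemma adj_delta p q (i : 'I_p) (j : 'I_q) : adj (delta_mx i j) = delta_mx j i.
Proof.
apply/matrixP => a b; rewrite !mxE.
by case: (a == j); case: (b == i); rewrite /= ?conjC1 ?conjC0.
Qed.

Lemma rank1_state n (g : 'M[C]_n) : is_state g -> \rank g = 1%N ->
  exists v : 'cV[C]_n, g = v *m adj v.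
Proof.
move=> [hg pg] rk.
have g0 : g != 0 by apply: contra_eqN rk => /eqP ->; rewrite mxrank0.
move: (col_base g) (row_base g) (mulmx_base g); rewrite rk => u r gE.
have [i0 hi0] : exists i, u i 0 != 0.
  case: (pickP (fun i => u i 0 != 0)) => [i hi|h]; first by exists i.
  exfalso; move/negP: g0; apply; apply/eqP; rewrite -gE.
  have -> : u = 0 by apply/matrixP => i j; rewrite (ord1 j) mxE; have := h i => /negbFE/eqP.
  by rewrite mul0mx.
have gij : forall i j, g i j = u i 0 * r 0 j.
  by move=> i j; rewrite -gE mxE big_ord1.
set c := (r 0 i0)^* / u i0 0.
have rE : forall j, r 0 j = c * (u j 0)^*.
  move=> j; have /matrixP/(_ i0 j) := hg; rewrite hadjE !gij rmorphM => e.
  by rewrite /c mulrAC [_ * (u j 0)^*]mulrC e mulrC mulKf.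
have gc : forall i j, g i j = c * (u i 0 * (u j 0)^*).
  by move=> i j; rewrite gij rE mulrCA.
have c0 : 0 <= c.
  have := pg (delta_mx i0 0); rewrite mul_delta_col adj_delta mul_delta_row gc.
  by rewrite pmulr_lge0 // mul_conjC_gt0.
exists (sqrtC c *: u); apply/matrixP => i j.
rewrite gc hadjZ -scalemxAl -scalemxAr scalerA.
rewrite (geC0_conj (x := sqrtC c)) ?sqrtC_ge0 // -expr2 sqrtCK.
by rewrite !mxE big_ord1 hadjE.
Qed.


Lemma tens_entry k m (a : 'cV[C]_k) (b : 'cV[C]_m) i p z :
  (a *t b) (mxtens_index (i, p)) z = a i 0 * b p 0.
Proof.
by rewrite mxE mxtens_indexK /= (ord1 (mxtens_unindex z).1) (ord1 (mxtens_unindex z).2).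
Qed.

Lemma main_C k m (g : 'M[C]_(k * m)) : is_state g -> \rank g = 1%N ->
  (CR g <-> exists (a : 'cV[C]_k) (b : 'cV[C]_m), g = (a *t b) *m adjmx (a *t b)).
Proof.
move=> st rk; split.
- move=> [_ cr]; have [v gv] := rank1_state st rk.
  set V : 'M[C]_(k, m) := \matrix_(i, p) v (mxtens_index (i, p)) 0.
  have gE : forall i p j q, g (mxtens_index (i, p)) (mxtens_index (j, q)) = V i p * (V j q)^*.
    by move=> i p j q; rewrite gv mxE big_ord1 hadjE !mxE.
  have TEq : (fun X => F_map g (G_map g X)) = (fun X => V *m adj V *m X *m (V *m adj V)).
    by apply: functional_extensionality => X; apply: TE.
  rewrite TEq in cr; have [w hw] := forward_core cr.
  have Ve : forall i p, V i p = w i 0 * (adj w *m V) 0 p.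
    by move=> i p; rewrite {1}hw mxE big_ord1.
  exists w, (adj w *m V)^T; apply/matrixP => x y.
  case: (mxtens_indexP x) => i p; case: (mxtens_indexP y) => j q.
  rewrite gE [RHS]mxE big_ord1 hadjE !tens_entry (Ve i p) (Ve j q).
  by rewrite !mxE.
- move=> [a [b gab]]; split => //.
  set V : 'M[C]_(k, m) := a *m b^T.
  have gE : forall i p j q, g (mxtens_index (i, p)) (mxtens_index (j, q)) = V i p * (V j q)^*.
    move=> i p j q; rewrite gab mxE big_ord1 hadjE !tens_entry.
    by rewrite /V !mxE !big_ord1 !mxE.
  have TEq : (fun X => F_map g (G_map g X)) = (fun X => V *m adj V *m X *m (V *m adj V)).
    by apply: functional_extensionality => X; apply: TE.
  rewrite TEq.
  have hA : adj (V *m adj V) = V *m adj V by rewrite hadjM hadjK.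
  case: (eqVneq a 0) => [a0|na].
    have -> : V *m adj V = 0 by rewrite /V a0 !mul0mx.
    exact: backward_zero.
  have [w [s [ww aE s0 sr]]] := normalize na.
  apply: (backward_rank1 (kap := s * s^* * (b^T *m adj b^T) 0 0) ww hA).
  have -> : V *m adj V = (s *: w) *m (b^T *m adj b^T) *m adj (s *: w).
    by rewrite /V aE hadjM !mulmxA.
  set c := (b^T *m adj b^T) 0 0.
  rewrite [b^T *m adj b^T]mx11_scalar -/c mul_mx_scalar hadjZ scalerA.
  rewrite -scalemxAl -scalemxAr scalerA.
  by congr (_ *: _); rewrite [RHS]mulrC mulrA.
Qed.

End Top.

Unset Implicit Arguments.

Theorem mainTheorem8 (R : realType) (k m : nat) (gamma : 'M[R[i]]_(k * m)) :
  is_state gamma -> \rank gamma = 1%N ->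
  (CR gamma <->
   exists (a : 'cV[R[i]]_k) (b : 'cV[R[i]]_m),
     gamma = (a *t b) *m adjmx (a *t b)).
Proof. exact: main_C. Qed.
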